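(* Let $g$ be a connected simple graph and $c:E(g)\to\{1,\dots,k\}$ an admissible colouring of its edges. Suppose that for every $2\le i\le k$, every connected component of $g(i)$ is a regular graph. Then $$\sigma(A(g))=\prod_{i=1}^{k}\ \prod_{h\in a_c(i)}\frac{\sigma\big(A(g_h(i+1),h)\big)}{\mathrm{reg}(g_h^+(i+1))},$$ where dividing by $\mathrm{reg}(g^+_h(i+1))$ means removing one occurrence of $\mathrm{reg}(C)$ for each vertex $C$ of $h$ with $|C|\ge2$.
   Context: All graphs are finite and simple; $A(\cdot)$ is the adjacency matrix; $\mathrm{reg}$ denotes regularity. Spectra are multisets written multiplicatively (product = multiset union). Divisibility: identify a graph on a finite set $V$ with the assembly of its connected components. For graphs $a_1,a_2$ on the same vertex set, $a_1$ divides $a_2$ if there is a graph $h$ whose vertex set is the set of vertex sets of the connected components of $a_1$ such that $E(a_2)=E(a_1)\cup\{\{x,y\}:x\in B,\ y\in B',\ \{B,B'\}\in E(h)\}$; then $h$ is denoted $a_2/a_1$. Admissible colouring: for a colouring $c:E(g)\to\{1,\dots,k\}$, let $g(1)=g$ and, for $i\ge2$, $g(i)$ the spanning subgraph of $g$ obtained by deleting all edges of colour $j<i$; also $g(k+1)$ is the edgeless graph on $V(g)$. $c$ is admissible if (1) for each $2\le i\le k$ in the image of $c$, $g(i)$ divides $g(i-1)$, and (2) whenever an edge incident to a vertex $v$ has colour $i\ge2$, some edge of colour $i-1$ is incident to $v$. For $1\le i\le k$, $a_c(i)$ is the set of connected components of the quotient graph $g(i)/g(i+1)$ having at least two vertices.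 For $h\in a_c(i)$, $g_h(i+1)$ denotes the family of connected components $C$ of $g(i+1)$ whose vertex sets are the vertices of $h$. The matrix $A(g_h(i+1),h)$ is indexed by the vertices $C$ of $h$, with diagonal entry $\mathrm{reg}(C)$ and off-diagonal $(C,C')$ entry $\sqrt{|C||C'|}$ if $\{C,C'\}\in E(h)$ and $0$ otherwise. *)

(* Defs.v *)
From mathcomp Require Import all_boot all_order all_algebra.
From mathcomp Require Import reals.
Set Implicit Arguments.
Unset Strict Implicit.
Unset Printing Implicit Defensive.
Import Order.TTheory GRing.Theory Num.Theory.

(* Edge colourings with colours in
   {1,...,k} are given by a symmetric function c : V -> V -> nat, only
   meaningful on edges. *)

Section Defs.
Variable V : finType.

Definition simple_graph (e : rel V) := symmetric e /\ irreflexive e.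

Definition connected_graph (e : rel V) := forall x y, connect e x y.

Definition comp (r : rel V) (x : V) : {set V} := [set y | connect r x y].

Definition comps (r : rel V) : {set {set V}} := [set comp r x | x : V].

Definition divides (a1 a2 : rel V) : Prop :=
  exists h : rel {set V}, symmetric h /\ irreflexive h /\
    forall x y, a2 x y = a1 x y ||
      [exists B in comps a1, exists B' in comps a1,
         [&& h B B', x \in B & y \in B']].

Definition colouring (e : rel V) (k : nat) (c : V -> V -> nat) : Prop :=
  (forall x y, c x y = c y x) /\
  (forall x y, e x y -> (1 <= c x y <= k)%N).

(* g(i): delete every edge of colour j < i  (g(1) = g, g(k+1) edgeless) *)
Definition gcol (e : rel V) (c : V -> V -> nat) (i : nat) : rel V :=
  fun x y => e x y && (i <= c x y)%N.

Definition admissible (e : rel V) (k : nat) (c : V -> V -> nat) : Prop :=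
  (forall i, (2 <= i <= k)%N -> (exists x y, e x y && (c x y == i)) ->
      divides (gcol e c i) (gcol e c i.-1)) /\
  (forall v w, e v w -> (2 <= c v w)%N ->
      exists u, e v u && (c v u == (c v w).-1)).

Definition deg (r : rel V) (x : V) : nat := #|[set y | r x y]|.

Definition regular_on (r : rel V) (C : {set V}) : Prop :=
  forall x y, x \in C -> y \in C -> deg r x = deg r y.

Definition reg (r : rel V) (C : {set V}) : nat :=
  if [pick x in C] is Some x then deg r x else 0%N.

(* the quotient graph g(i)/g(i+1), on the components of g(i+1) *)
Definition quot (e : rel V) (c : V -> V -> nat) (i : nat) : rel {set V} :=
  fun B B' => [&& B \in comps (gcol e c i.+1), B' \in comps (gcol e c i.+1),
                  B != B' &
                  [exists x in B, exists y in B', gcol e c i x y]].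

Definition a_c (e : rel V) (c : V -> V -> nat) (i : nat) : {set {set {set V}}} :=
  [set H in [set [set B' | connect (quot e c i) B B'] | B in comps (gcol e c i.+1)]
     | (2 <= #|H|)%N].

End Defs.

Local Open Scope ring_scope.
Section Spectral.
Variable R : realType.

Definition spec_mult (n : nat) (M : 'M[R]_n) (lambda : R) : nat :=
  mup lambda (char_poly M).

Variable V : finType.

Definition adj_mx (e : rel V) : 'M[R]_#|V| :=
  \matrix_(p, q) ((e (enum_val p) (enum_val q))%:R : R).

(* A(g_h(i+1), h) for H in a_c(i), indexed by an enumeration of H *)
Definition quot_mx (e : rel V) (c : V -> V -> nat) (i : nat)
    (H : {set {set V}}) : 'M[R]_#|H| :=
  \matrix_(p, q)
    (let C := @enum_val _ (mem H) p in let C' := @enum_val _ (mem H) q in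
     if p == q then ((reg (gcol e c i.+1) C)%:R : R)
     else if quot e c i C C' then Num.sqrt ((#|C| * #|C'|)%N%:R)
     else 0).

End Spectral.

(* Main.v *)
Require Import Defs.
From mathcomp Require Import all_boot all_order all_algebra.
From mathcomp Require Import reals.
From mathcomp Require Import all_fingroup.
From mathcomp Require Import zify.
Require Import Defs.
Set Implicit Arguments.
Unset Strict Implicit.
Unset Printing Implicit Defensive.
Import Order.TTheory GRing.Theory Num.Theory.
Local Open Scope ring_scope.

Section Mask.
Variable K : comPzRingType.

Lemma sum_delta n (G : 'I_n -> K) q : \sum_j G j * (j == q)%:R = G q.
Proof.
rewrite (bigD1 q) //= eqxx mulr1 big1 ?addr0 // => j /negPf->; by rewrite mulr0.
Qed.

Lemma sum_deltal n (G : 'I_n -> K) q : \sum_j (q == j)%:R * G j = G q.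
Proof.
rewrite (bigD1 q) //= eqxx mul1r big1 ?addr0 // => j.
by rewrite eq_sym => /negPf->; rewrite mul0r.
Qed.

Variable T : finType.

Definition maskmx (S : {set T}) (F : T -> T -> K) : 'M[K]_#|T| :=
  \matrix_(p, q) (if (enum_val p \in S) && (enum_val q \in S)
                  then F (enum_val p) (enum_val q)
                  else (enum_val p == enum_val q)%:R).

Lemma enum_val_eq (p q : 'I_#|T|) : (enum_val p == enum_val q) = (p == q).
Proof. exact: (inj_eq enum_val_inj). Qed.

Lemma maskmx_mul (S1 S2 : {set T}) (F : T -> T -> K) :
  [disjoint S1 & S2] ->
  (forall u v, u \in S1 -> v \in S2 -> F u v = 0 /\ F v u = 0) ->
  maskmx (S1 :|: S2) F = maskmx S1 F *m maskmx S2 F.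
Proof.
move=> dis F0; apply/matrixP => p q; rewrite !mxE.
have neq a b : a \in S1 -> b \notin S1 -> (a == b) = false.
  by move=> aS bS; apply/negP => /eqP ab; move: bS; rewrite -ab aS.
have nS2 a : a \in S1 -> (a \in S2) = false by move=> aS; apply: (disjointFr dis aS).
case uS1: (enum_val p \in S1).
- have E j : maskmx S1 F p j * maskmx S2 F j q = maskmx S1 F p j * (j == q)%:R.
    rewrite !mxE uS1 /=; case tS1: (enum_val j \in S1).
      by rewrite nS2 //= enum_val_eq.
    by rewrite neq ?tS1 // !mul0r.
  rewrite (eq_bigr _ (fun j _ => E j)) sum_delta !mxE uS1 !inE uS1 /=.
  case vS1: (enum_val q \in S1) => //=.
  case vS2: (enum_val q \in S2) => //=.
  by rewrite neq ?vS1 //; case: (F0 _ _ uS1 vS2) => ->.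
- have E j : maskmx S1 F p j * maskmx S2 F j q = (p == j)%:R * maskmx S2 F j q.
    by rewrite !mxE uS1 /= enum_val_eq.
  rewrite (eq_bigr _ (fun j _ => E j)) sum_deltal !mxE !inE uS1 /=.
  case uS2: (enum_val p \in S2) => //=.
  case vS1: (enum_val q \in S1) => //=.
  rewrite nS2 //= eq_sym neq //; last by rewrite uS1.
  by case: (F0 _ _ vS1 uS2) => _ ->.
Qed.

Lemma maskmx0 (F : T -> T -> K) : maskmx set0 F = 1%:M.
Proof. by apply/matrixP => p q; rewrite !mxE !inE /= enum_val_eq. Qed.

Lemma det_maskmx_cover (P : {set {set T}}) (F : T -> T -> K) :
  (forall C C', C \in P -> C' \in P -> C != C' ->
     [disjoint C & C'] /\ forall u v, u \in C -> v \in C' -> F u v = 0) ->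
  \det (maskmx (\bigcup_(C in P) C) F) = \prod_(C in P) \det (maskmx C F).
Proof.
elim: {P}_.+1 {-2}P (ltnSn #|P|) => // n IH P szP hP.
case: (set_0Vmem P) => [->|[C CP]].
  by rewrite !big_set0 maskmx0 det1.
rewrite (big_setD1 C CP) (big_setD1 C CP) /= maskmx_mul ?det_mulmx ?IH //.
- by move: szP; rewrite (cardsD1 C P) CP ltnS.
- move=> D D'; rewrite !inE => /andP[_ DP] /andP[_ D'P]; exact: hP.
- apply/bigcup_disjointP => D; rewrite !inE => /andP[DC DP].
  by case: (hP C D CP DP); rewrite // eq_sym.
- move=> u v uC /bigcupP[D]; rewrite !inE => /andP[DC DP] vD.
  have CD : C != D by rewrite eq_sym.
  split; first by case: (hP C D CP DP CD) => _; apply.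
  by case: (hP D C DP CP DC) => _; apply.
Qed.

Lemma det_castmx n m (e : n = m) (A : 'M[K]_n) : \det (castmx (e, e) A) = \det A.
Proof. by case: m / e; rewrite castmx_id. Qed.

Lemma det_permute n (s : 'S_n) (A : 'M[K]_n) :
  \det (\matrix_(i, j) A (s i) (s j)) = \det A.
Proof.
have -> : \matrix_(i, j) A (s i) (s j) = row_perm s (col_perm s A).
  by apply/matrixP => i j; rewrite !mxE.
rewrite row_permE col_permE !det_mulmx !det_perm odd_permV.
by rewrite mulrCA -expr2 sqrr_sign mulr1.
Qed.

Lemma det_reindex n (e : n = #|T|) (phi : 'I_n -> T) (phi_inj : injective phi)
    (G : T -> T -> K) :
  \det (\matrix_(i, j < n) G (phi i) (phi j)) =
  \det (\matrix_(i, j < #|T|) G (enum_val i) (enum_val j)).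
Proof.
pose s0 i := cast_ord (esym e) (enum_rank (phi i)).
have s0_inj : injective s0.
  by move=> i j /cast_ord_inj /enum_rank_inj /phi_inj.
pose s := perm s0_inj.
symmetry; rewrite -(det_castmx (esym e)) -(det_permute s); congr (\det _).
apply/matrixP => i j; rewrite !mxE castmxE /= !permE /s0 /= esymK !cast_ordKV.
by rewrite mxE !enum_rankK.
Qed.

Lemma det_maskmx (S : {set T}) (F : T -> T -> K) :
  \det (maskmx S F) = \det (\matrix_(i, j < #|S|) F (enum_val i) (enum_val j)).
Proof.
have cardE : (#|S| + #|~: S| = #|T|)%N := cardsC S.
pose phi (i : 'I_(#|S| + #|~: S|)) : T :=
  match split i with inl a => enum_val a | inr b => enum_val b end.
have phi_inj : injective phi.
  move=> i j; rewrite /phi.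
  case: splitP => a ea; case: splitP => b eb.
  - by move/enum_val_inj => ab; apply/val_inj; rewrite /= ea eb ab.
  - by move=> E; have := enum_valP a; rewrite E; have := enum_valP b; rewrite inE => /negPf->.
  - by move=> E; have := enum_valP b; rewrite -E; have := enum_valP a; rewrite inE => /negPf->.
  - by move/enum_val_inj => ab; apply/val_inj; rewrite /= ea eb ab.
pose G u v := if (u \in S) && (v \in S) then F u v else (u == v)%:R.
have -> : maskmx S F = \matrix_(i, j < #|T|) G (enum_val i) (enum_val j).
  by apply/matrixP => i j; rewrite !mxE.
rewrite -(det_reindex cardE phi_inj).
have -> : \matrix_(i, j) G (phi i) (phi j) =
    block_mx (\matrix_(i, j < #|S|) F (enum_val i) (enum_val j)) 0 0 1%:M.
  apply/matrixP => i j; rewrite -[i]splitK -[j]splitK.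
  case: (split i) => a; case: (split j) => b; rewrite mxE /phi /G !unsplitK /=.
  all: rewrite ?block_mxEul ?block_mxEur ?block_mxEdl ?block_mxEdr ?mxE.
  - by rewrite !enum_valP.
  - have := enum_valP b; rewrite inE => /negPf->; rewrite andbF.
    case: eqP => // E; have := enum_valP a; rewrite E.
    by have := enum_valP b; rewrite inE => /negPf->.
  - have := enum_valP a; rewrite inE => /negPf->; rewrite /=.
    case: eqP => // E; have := enum_valP b; rewrite -E.
    by have := enum_valP a; rewrite inE => /negPf->.
  - have := enum_valP a; rewrite inE => /negPf->; rewrite /=.
    by rewrite (inj_eq enum_val_inj).
by rewrite det_ublock det1 mulr1.
Qed.

Lemma det_sylvester n m (A : 'M[K]_(n, m)) (B : 'M[K]_(m, n)) :
  \det (1%:M + A *m B) = \det (1%:M + B *m A).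
Proof.
have E1 : block_mx 1%:M (- A) B 1%:M =
    block_mx 1%:M 0 B 1%:M *m block_mx 1%:M (- A) 0 (1%:M + B *m A).
  by rewrite mulmx_block !mul1mx !mul0mx !mulmx1 !addr0 ?add0r mulmxN addrCA addNr addr0.
have E2 : block_mx 1%:M (- A) B 1%:M =
    block_mx 1%:M (- A) 0 1%:M *m block_mx (1%:M + A *m B) 0 B 1%:M.
  by rewrite mulmx_block !mul1mx !mul0mx !mulmx1 ?addr0 !add0r mulNmx addrK.
have := congr1 determinant E2; rewrite {1}E1 !det_mulmx det_lblock det_ublock.
by rewrite det_ublock det_lblock !det1 !mul1r mulr1.
Qed.

End Mask.

Lemma sum_rankT (R : nmodType) (T : finType) (F : 'I_#|T| -> R) :
  \sum_(q < #|T|) F q = \sum_t F (enum_rank t).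
Proof.
rewrite (reindex (@enum_rank T)) //; exists enum_val => t _; [exact: enum_rankK | exact: enum_valK].
Qed.

Lemma prod_rankT (R : comPzSemiRingType) (T : finType) (F : 'I_#|T| -> R) :
  \prod_(q < #|T|) F q = \prod_t F (enum_rank t).
Proof.
rewrite (reindex (@enum_rank T)) //; exists enum_val => t _; [exact: enum_rankK | exact: enum_valK].
Qed.

Lemma mulr_natb (R : pzSemiRingType) (a : R) (b : bool) : a * b%:R = if b then a else 0.
Proof. by case: b; rewrite ?mulr1 ?mulr0. Qed.

Section Join.
Variable R : rcfType.
Variable T : finType.
Variables (r s : rel T) (W : {set T}) (H : {set {set T}}) (rr : {set T} -> nat)
  (hm : rel {set T}).
Hypothesis HW : forall u, u \in W -> exists2 C, C \in H & u \in C.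
Hypothesis HsubW : forall C u, C \in H -> u \in C -> u \in W.
Hypothesis Hdis : forall C C' u, C \in H -> C' \in H -> u \in C -> u \in C' -> C = C'.
Hypothesis Hne : forall C, C \in H -> (0 < #|C|)%N.
Hypothesis Hloc : forall C u t, C \in H -> u \in C -> r u t -> t \in C.
Hypothesis Hreg : forall C u, C \in H -> u \in C -> (\sum_(t in C) (r u t : nat))%N = rr C.
Hypothesis Hs : forall C C' u v, C \in H -> C' \in H -> u \in C -> v \in C' ->
  s u v = r u v || hm C C'.
Hypothesis Hhm : forall C, hm C C = false.

Definition Fr (e0 : rel T) (x : R) := fun u v : T => x *+ (u == v) - (e0 u v)%:R.
Definition QF (x : R) := fun C C' : {set T} => x *+ (C == C') -
  (if C == C' then (rr C)%:R else if hm C C' then Num.sqrt ((#|C| * #|C'|)%N%:R) else 0).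

Variable x : R.

Definition Pm : 'M[R]_(#|T|, #|{set T}|) :=
  \matrix_(p, j) ((enum_val j \in H) && (enum_val p \in enum_val j))%:R.
Definition Hmx : 'M[R]_#|{set T}| :=
  \matrix_(i, j) ((enum_val i \in H) && (enum_val j \in H) && hm (enum_val i) (enum_val j))%:R.
Definition dvec : 'rV[R]_#|{set T}| :=
  \row_i (if enum_val i \in H then x - (rr (enum_val i))%:R else 1).
Definition nvec : 'rV[R]_#|{set T}| :=
  \row_i (if enum_val i \in H then (#|enum_val i|)%:R else 0).
Definition svec : 'rV[R]_#|{set T}| :=
  \row_i (if enum_val i \in H then Num.sqrt (#|enum_val i|)%:R else 1).

Lemma Pm_row p C : C \in H -> enum_val p \in C -> forall i, Pm p i = (enum_rank C == i)%:R.
Proof.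
move=> CH uC i; rewrite mxE; congr (_%:R).
case: eqP => [<-|ne]; first by rewrite enum_rankK CH uC.
case: andP => // [[iH ui]]; exfalso; apply: ne; rewrite (Hdis CH iH uC ui).
by rewrite enum_valK.
Qed.

Lemma Pm_row0 p : enum_val p \notin W -> forall i, Pm p i = 0.
Proof.
move=> uW i; rewrite mxE; case: andP => // [[iH ui]].
by move: uW; rewrite (HsubW iH ui).
Qed.

Lemma F1 : maskmx W (Fr r x) *m Pm = Pm *m diag_mx dvec.
Proof.
apply/matrixP => p j; rewrite mul_mx_diag !mxE.
rewrite sum_rankT; under eq_bigr => t _ do rewrite !mxE enum_rankK mulr_natb.
set u := enum_val p; set C := enum_val j.
case CH: (C \in H) => /=; last by rewrite mul0r big1.
rewrite -big_mkcond /=.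
case uW: (u \in W) => /=.
- have E t : t \in C -> (if true && (t \in W) then Fr r x u t else (u == t)%:R) = Fr r x u t.
    by move=> tC; rewrite (HsubW CH tC).
  rewrite (eq_bigr _ E) /Fr sumrB.
  case uC: (u \in C).
  + rewrite (bigD1 u) //= eqxx big1 ?addr0; last first.
      by move=> t /andP[_]; rewrite eq_sym => /negPf->.
    by rewrite -natr_sum Hreg // mul1r.
  + rewrite big1; last first.
      by move=> t tC; case: eqP => [ut|]; [move: uC; rewrite ut tC | rewrite mulr0n].
    rewrite big1 ?subr0 ?mul0r //.
    move=> t tC; case rut: (r u t) => //.
    have [Cu CuH uCu] := HW uW.
    have := Hdis CuH CH (Hloc CuH uCu rut) tC => E'.
    by move: uC; rewrite -E' uCu.
- case uC: (u \in C); first by move: uW; rewrite (HsubW CH uC).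
  rewrite mul0r big1 // => t tC.
  case ut: (u == t) => //; move: uW; rewrite (eqP ut) (HsubW CH tC).
  by [].
Qed.

Lemma PmXs p C (F : 'I_#|{set T}| -> R) : C \in H -> enum_val p \in C ->
  \sum_j Pm p j * F j = F (enum_rank C).
Proof.
move=> CH uC; under eq_bigr => i _ do rewrite (Pm_row CH uC).
exact: sum_deltal.
Qed.

Lemma PmXs0 p (F : 'I_#|{set T}| -> R) : enum_val p \notin W -> \sum_j Pm p j * F j = 0.
Proof.
by move=> uW; rewrite big1 // => i _; rewrite Pm_row0 // mul0r.
Qed.

Lemma PtXs q C (F : 'I_#|{set T}| -> R) : C \in H -> enum_val q \in C ->
  \sum_j F j * Pm^T j q = F (enum_rank C).
Proof.
move=> CH uC; under eq_bigr => j _ do rewrite mxE (Pm_row CH uC) eq_sym.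
exact: sum_delta.
Qed.

Lemma PtXs0 q (F : 'I_#|{set T}| -> R) : enum_val q \notin W -> \sum_j F j * Pm^T j q = 0.
Proof.
by move=> uW; rewrite big1 // => j _; rewrite mxE Pm_row0 // mulr0.
Qed.

Lemma F2 : maskmx W (Fr s x) = maskmx W (Fr r x) - Pm *m Hmx *m Pm^T.
Proof.
apply/matrixP => p q; rewrite -mulmxA !mxE /Fr.
case uW: (enum_val p \in W); last by rewrite PmXs0 ?uW // subr0.
have [Cu CuH uCu] := HW uW.
rewrite (PmXs _ CuH uCu) mxE.
case vW: (enum_val q \in W); last by rewrite PtXs0 ?vW // subr0.
have [Cv CvH vCv] := HW vW.
rewrite (PtXs _ CvH vCv) mxE !enum_rankK CuH CvH /=.
rewrite (Hs CuH CvH uCu vCv) -addrA -opprD; congr (_ - _).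
case ruv: (r _ _) => /=; last by rewrite add0r.
have := Hdis CuH CvH (Hloc CuH uCu ruv) vCv => E.
by rewrite E Hhm addr0.
Qed.

Lemma sum_bool_card (P : {set T}) : (\sum_t (t \in P : nat))%N = #|P|.
Proof. by rewrite -sum1_card [RHS]big_mkcond /=; apply: eq_bigr => t _; case: (t \in P). Qed.

Lemma ev_eq (i j : 'I_#|{set T}|) : (enum_val i == enum_val j) = (i == j).
Proof. exact: (inj_eq enum_val_inj). Qed.

Lemma F3 : Pm^T *m Pm = diag_mx nvec.
Proof.
apply/matrixP => i j; rewrite !mxE.
under eq_bigr => k _ do rewrite !mxE -natrM.
rewrite -natr_sum sum_rankT.
under eq_bigr => t _ do rewrite enum_rankK.
case: (eqVneq i j) => [<-|ne].
  rewrite mulr1n; case CH: (enum_val i \in H) => /=.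
    under eq_bigr => t _ do rewrite mulnb andbb.
    by rewrite sum_bool_card.
  by rewrite big1.
rewrite mulr0n big1 // => t _.
case: (boolP (enum_val i \in H)) => iH; case: (boolP (enum_val j \in H)) => jH;
  rewrite /= ?muln0 //.
case: (boolP (t \in enum_val i)) => ti; case: (boolP (t \in enum_val j)) => tj;
  rewrite /= ?muln0 //.
by move: ne; rewrite -ev_eq (Hdis iH jH ti tj) eqxx.
Qed.

Lemma F4 : diag_mx svec *m (diag_mx dvec - Hmx *m diag_mx nvec) =
  maskmx H (QF x) *m diag_mx svec.
Proof.
rewrite mul_diag_mx !mul_mx_diag; apply/matrixP => i j; rewrite !mxE.
rewrite /QF ev_eq.
case: (eqVneq i j) => [<-|ne].
  rewrite Hhm andbF mul0r subr0 mulr1n andbb.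
  case: (enum_val i \in H) => /=; last by rewrite mulr1.
  by rewrite mulrC.
rewrite !mulr0n !sub0r.
case iH: (enum_val i \in H); rewrite /= ?mul0r ?oppr0 ?mulr0 ?mul0r //.
case jH: (enum_val j \in H); rewrite /= ?mul0r ?oppr0 ?mulr0 ?mul0r //.
case hij: (hm _ _); rewrite /= ?mul0r ?oppr0 ?mulr0 ?mul0r //.
rewrite mul1r mulrN mulNr; congr (- _).
rewrite natrM sqrtrM ?ler0n // -mulrA -expr2 sqr_sqrtr ?ler0n //.
Qed.

Lemma detD : \det (diag_mx dvec) = \prod_(C in H) (x - (rr C)%:R).
Proof.
rewrite det_diag prod_rankT; under eq_bigr => t _ do rewrite mxE enum_rankK.
by rewrite -big_mkcond.
Qed.

Lemma detS : \det (diag_mx svec) != 0.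
Proof.
rewrite det_diag prod_rankT; under eq_bigr => t _ do rewrite mxE enum_rankK.
apply/prodf_neq0 => C _; case CH: (C \in H); last by rewrite oner_neq0.
by rewrite sqrtr_eq0 -ltNge ltr0n Hne.
Qed.

Lemma join_pt : \det (maskmx W (Fr r x)) != 0 -> (forall C, C \in H -> x != (rr C)%:R) ->
  \det (maskmx W (Fr s x)) * \prod_(C in H) (x - (rr C)%:R) =
  \det (maskmx W (Fr r x)) * \det (maskmx H (QF x)).
Proof.
move=> xM xD.
set M := maskmx W (Fr r x).
set D := diag_mx dvec.
have Mu : M \in unitmx by rewrite unitmxE unitfE.
have Du : D \in unitmx.
  rewrite unitmxE unitfE detD; apply/prodf_neq0 => C CH.
  by rewrite subr_eq0 xD.
have E1 : invmx M *m Pm = Pm *m invmx D.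
  have h : Pm = invmx M *m Pm *m D by rewrite -mulmxA -F1 mulKmx.
  by rewrite {2}h mulmxK.
have E2 : maskmx W (Fr s x) = M *m (1%:M + Pm *m (- (invmx D *m (Hmx *m Pm^T)))).
  rewrite F2 mulmxDr mulmx1 !mulmxN !mulmxA F1 mulmxK //.
have E3 : 1%:M + (- (invmx D *m (Hmx *m Pm^T))) *m Pm =
    invmx D *m (D - Hmx *m diag_mx nvec).
  rewrite mulNmx -!mulmxA F3 mulmxBr mulVmx //.
have E4 : \det (D - Hmx *m diag_mx nvec) = \det (maskmx H (QF x)).
  apply: (mulfI detS); rewrite -det_mulmx F4 det_mulmx mulrC //.
rewrite E2 det_mulmx det_sylvester E3 det_mulmx det_inv E4 -detD -/D.
rewrite -!mulrA; congr (_ * _); rewrite mulrCA mulVf ?mulr1 //.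
by rewrite -unitfE -unitmxE.
Qed.

End Join.

Section PolyLevel.
Variable R : rcfType.

Lemma poly_zero_everywhere (p : {poly R}) : (forall x, p.[x] = 0) -> p = 0.
Proof.
move=> hp; apply/eqP; apply/negPn/negP => p0.
suff : (size p < size p)%N by rewrite ltnn.
have {1}<- : size [seq (i%:R : R) | i <- iota 0 (size p)] = size p.
  by rewrite size_map size_iota.
apply: max_poly_roots p0 _ _.
  by apply/allP => y /mapP[i _ ->]; rewrite /root hp.
by rewrite map_inj_uniq ?iota_uniq // => i j /eqP; rewrite eqr_nat => /eqP.
Qed.

Lemma poly_pointwise (p q g : {poly R}) : g != 0 ->
  (forall x, g.[x] != 0 -> p.[x] = q.[x]) -> p = q.
Proof.
move=> g0 hx; apply/eqP; rewrite -subr_eq0.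
have : (p - q) * g = 0.
  apply: poly_zero_everywhere => x; rewrite hornerM hornerD hornerN.
  by case: (eqVneq g.[x] 0) => [->|gx]; rewrite ?mulr0 // hx // subrr mul0r.
by move/eqP; rewrite mulf_eq0 (negPf g0) orbF.
Qed.

Lemma horner_det_maskmx (T : finType) (S : {set T}) (F : T -> T -> {poly R}) x :
  (\det (maskmx S F)).[x] = \det (maskmx S (fun u v => (F u v).[x])).
Proof.
rewrite -horner_evalE -det_map_mx; congr (\det _); apply/matrixP => i j.
by rewrite !mxE; case: ifP => _ //; rewrite rmorph_nat.
Qed.

Lemma mup_prod (I : finType) (P : pred I) (F : I -> {poly R}) l :
  (forall i, P i -> F i != 0) ->
  mup l (\prod_(i | P i) F i) = (\sum_(i | P i) mup l (F i))%N.
Proof.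
move=> F0.
suff : \prod_(i | P i) F i != 0 /\ mup l (\prod_(i | P i) F i) = (\sum_(i | P i) mup l (F i))%N.
  by case.
apply: (big_rec2 (fun p n => p != 0 /\ mup l p = n)).
  by rewrite oner_neq0; split => //; rewrite mupNroot // root1.
move=> i p n Pi [p0 <-]; split; first by rewrite mulf_neq0 ?F0.
by rewrite mupM ?F0.
Qed.

Lemma mup_XsubC l a : mup l ('X - a%:P : {poly R}) = (a == l).
Proof. have := mup_XsubCX 1 l a; rewrite expr1 => ->; by case: eqP. Qed.

Variable T : finType.

Definition FrP (e0 : rel T) := fun u v : T => ('X : {poly R}) *+ (u == v) - (e0 u v)%:R.

Lemma horner_FrP e0 x u v : (FrP e0 u v).[x] = Fr e0 x u v.
Proof. by rewrite /FrP /Fr hornerD hornerN hornerMn hornerX -[(e0 u v)%:R]polyC_natr hornerC. Qed.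

Lemma det_FrP (e0 : rel T) S :
  \det (maskmx S (FrP e0)) =
  char_poly (\matrix_(i, j < #|S|) ((e0 (enum_val i) (enum_val j))%:R : R)).
Proof.
rewrite det_maskmx; congr (\det _); apply/matrixP => i j; rewrite !mxE /FrP.
by rewrite (inj_eq enum_val_inj) rmorph_nat.
Qed.

Lemma det_FrP_neq0 (e0 : rel T) S : \det (maskmx S (FrP e0)) != 0.
Proof. by rewrite det_FrP monic_neq0 // char_poly_monic. Qed.

End PolyLevel.

Lemma eq_maskmx (K : comPzRingType) (T : finType) (S : {set T}) (F G : T -> T -> K) :
  F =2 G -> maskmx S F = maskmx S G.
Proof. by move=> FG; apply/matrixP => i j; rewrite !mxE FG. Qed.

Section JoinPoly.
Variable R : rcfType.
Variable T : finType.
Variables (r s : rel T) (W : {set T}) (H : {set {set T}}) (rr : {set T} -> nat)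
  (hm : rel {set T}).
Hypothesis HW : forall u, u \in W -> exists2 C, C \in H & u \in C.
Hypothesis HsubW : forall C u, C \in H -> u \in C -> u \in W.
Hypothesis Hdis : forall C C' u, C \in H -> C' \in H -> u \in C -> u \in C' -> C = C'.
Hypothesis Hne : forall C, C \in H -> (0 < #|C|)%N.
Hypothesis Hloc : forall C u t, C \in H -> u \in C -> r u t -> t \in C.
Hypothesis Hreg : forall C u, C \in H -> u \in C -> (\sum_(t in C) (r u t : nat))%N = rr C.
Hypothesis Hs : forall C C' u v, C \in H -> C' \in H -> u \in C -> v \in C' ->
  s u v = r u v || hm C C'.
Hypothesis Hhm : forall C, hm C C = false.

Definition QFP (C C' : {set T}) : {poly R} := 'X *+ (C == C') -
  (if C == C' then (rr C)%:R else if hm C C' then Num.sqrt ((#|C| * #|C'|)%N%:R) else 0)%:P.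

Lemma join_poly :
  \det (maskmx W (FrP R s)) * \prod_(C in H) ('X - ((rr C)%:R)%:P) =
  \det (maskmx W (FrP R r)) * \det (maskmx H QFP).
Proof.
apply: (@poly_pointwise _ _ _ (\det (maskmx W (FrP R r)) * \prod_(C in H) ('X - ((rr C)%:R)%:P))).
  rewrite mulf_neq0 ?det_FrP_neq0 //; apply/prodf_neq0 => C _.
  by rewrite polyXsubC_eq0.
move=> x; rewrite !hornerM !horner_det_maskmx horner_prod => gx.
have [xM xD] : \det (maskmx W (fun u v => (FrP R r u v).[x])) != 0 /\
    \prod_(C in H) ('X - ((rr C)%:R)%:P).[x] != 0.
  by move: gx; rewrite mulf_eq0 negb_or => /andP.
rewrite (eq_maskmx _ (horner_FrP r x)) (eq_maskmx _ (horner_FrP s x)) in xM *.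
have -> : maskmx H (fun u v => (QFP u v).[x]) = maskmx H (QF rr hm x).
  apply: eq_maskmx => C C'; rewrite /QFP /QF hornerD hornerN hornerMn hornerX hornerC.
  by [].
under eq_bigr => C _ do rewrite hornerXsubC.
apply: join_pt => //.
move=> C CH; move/prodf_neq0: xD => /(_ C CH).
by rewrite hornerXsubC subr_eq0.
Qed.

End JoinPoly.

Section Comp.
Variable T : finType.
Variable r : rel T.
Hypothesis rsym : symmetric r.

Lemma comp_refl x : x \in comp r x.
Proof. by rewrite inE connect0. Qed.

Lemma comp_eq x y : y \in comp r x -> comp r y = comp r x.
Proof.
rewrite inE => cxy; apply/setP => z; rewrite !inE; apply/idP/idP => h.
  exact: connect_trans cxy h.
by rewrite (sym_connect_sym rsym) in cxy; exact: connect_trans cxy h.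
Qed.

Lemma compsP C : reflect (exists x, C = comp r x) (C \in comps r).
Proof.
apply: (iffP imsetP) => [[x _ ->]|[x ->]]; by exists x.
Qed.

Lemma comp_in_comps x : comp r x \in comps r.
Proof. by apply/compsP; exists x. Qed.

Lemma comps_mem C u : C \in comps r -> u \in C -> C = comp r u.
Proof. by case/compsP => x -> ux; rewrite (comp_eq ux). Qed.

Lemma comps_dis C C' u : C \in comps r -> C' \in comps r -> u \in C -> u \in C' -> C = C'.
Proof. by move=> CP C'P uC uC'; rewrite (comps_mem CP uC) (comps_mem C'P uC'). Qed.

Lemma comps_loc C u t : C \in comps r -> u \in C -> r u t -> t \in C.
Proof.
move=> CP uC rut; rewrite (comps_mem CP uC) inE; exact: connect1.
Qed.

Lemma comps_ne C : C \in comps r -> (0 < #|C|)%N.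
Proof. by case/compsP => x ->; apply/card_gt0P; exists x; apply: comp_refl. Qed.

Lemma comp_eqE x y : (comp r x == comp r y) = connect r x y.
Proof.
apply/idP/idP => [/eqP E|cxy].
  by have := comp_refl y; rewrite -E inE.
by apply/eqP/esym/comp_eq; rewrite inE.
Qed.

Lemma connect_empty u v : (forall x y, r x y = false) -> connect r u v -> u = v.
Proof.
move=> r0 /connectP[[|a p] /=]; first by move=> _ ->.
by rewrite r0.
Qed.

End Comp.

Lemma comp_sub (T : finType) (r s : rel T) x :
  (forall u v, r u v -> s u v) -> comp r x \subset comp s x.
Proof.
move=> rs; apply/subsetP => y; rewrite !inE; apply: connect_sub => u v ruv.
by apply: connect1; apply: rs.
Qed.

Lemma card_sum_cond (X : finType) (A : {set X}) (P Q : pred X) :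
  #|[set C in A | P C && Q C]| = (\sum_(C in A | P C) (Q C : nat))%N.
Proof.
rewrite -sum1_card [LHS]big_mkcond [RHS]big_mkcond /=; apply: eq_bigr => C _.
by rewrite !inE; case: (C \in A); case: (P C); case: (Q C).
Qed.

Lemma eq_maskmx_in (K : comPzRingType) (T : finType) (S : {set T}) (F G : T -> T -> K) :
  {in S &, F =2 G} -> maskmx S F = maskmx S G.
Proof.
move=> FG; apply/matrixP => i j; rewrite !mxE.
by case: (boolP (enum_val i \in S)) => //= iS; case: (boolP (enum_val j \in S)) => //= jS; rewrite FG.
Qed.

Section Graph.
Variables (R : realType) (V : finType) (e : rel V) (k : nat) (c : V -> V -> nat).
Hypothesis Hsimple : simple_graph e.
Hypothesis Hconn : connected_graph e.
Hypothesis Hcard : (1 < #|V|)%N.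
Hypothesis Hcol : colouring e k c.
Hypothesis Hadm : admissible e k c.
Hypothesis Hregular : forall i, (2 <= i <= k)%N ->
  forall C, C \in comps (gcol e c i) -> regular_on (gcol e c i) C.

Local Notation g := (gcol e c).

Lemma g_sym i : symmetric (g i).
Proof. by move=> x y; rewrite /gcol (Hsimple.1 x y) (Hcol.1 x y). Qed.

Lemma g_irr i x : g i x x = false.
Proof. by rewrite /gcol Hsimple.2. Qed.

Lemma g_subS i x y : g i.+1 x y -> g i x y.
Proof. by rewrite /gcol => /andP[-> /ltnW]. Qed.

Lemma g_top x y : g k.+1 x y = false.
Proof.
rewrite /gcol; case exy: (e x y) => //=.
by rewrite ltnNge; case/andP: (Hcol.2 x y exy) => _ ->.
Qed.

Lemma g1 x y : g 1 x y = e x y.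
Proof.
rewrite /gcol; case exy: (e x y) => //=.
by case/andP: (Hcol.2 x y exy).
Qed.

Lemma no_higher i : ~~ [exists x, exists y, e x y && (c x y == i.+1)] ->
  forall x y, g i.+1 x y = false.
Proof.
move=> none.
have key : forall d x y, e x y -> c x y = (i.+1 + d)%N -> False.
  elim=> [|d IH] x y exy cxy.
    move/negP: none; apply; apply/existsP; exists x; apply/existsP; exists y.
    by rewrite exy cxy addn0 eqxx.
  have c2 : (2 <= c x y)%N by rewrite cxy addnS !ltnS leq_addr.
  have [u /andP[exu /eqP cxu]] := Hadm.2 x y exy c2.
  by apply: (IH x u exu); rewrite cxu cxy addnS.
move=> x y; rewrite /gcol; case exy: (e x y) => //=.
apply/negP => le; apply: (key (c x y - i.+1)%N x y exy).
by rewrite subnKC.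
Qed.

Lemma structure_empty i : (forall x y, g i.+1 x y = false) ->
  (forall u v, connect (g i.+1) u v -> g i u v = g i.+1 u v) /\
  (forall u v u' v', connect (g i.+1) u u' -> connect (g i.+1) v v' ->
     ~~ connect (g i.+1) u v -> g i u v -> g i u' v').
Proof.
move=> g0; split.
  by move=> u v /(connect_empty g0) ->; rewrite !g_irr.
by move=> u v u' v' /(connect_empty g0) <- /(connect_empty g0) <-.
Qed.

Lemma structure_div i : divides (g i.+1) (g i) ->
  (forall u v, connect (g i.+1) u v -> g i u v = g i.+1 u v) /\
  (forall u v u' v', connect (g i.+1) u u' -> connect (g i.+1) v v' ->
     ~~ connect (g i.+1) u v -> g i u v -> g i u' v').
Proof.
case=> h [hsym [hirr hE]]; split.
  move=> u v cuv; rewrite hE; case: (g i.+1 u v) => //=.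
  apply: negbTE; apply/negP => /existsP[B /andP[BP /existsP[B' /andP[B'P /and3P[hBB' uB vB']]]]].
  have E1 := comps_mem (g_sym _) BP uB.
  have E2 := comps_mem (g_sym _) B'P vB'.
  move: hBB'; rewrite E1 E2.
  have -> : comp (g i.+1) v = comp (g i.+1) u by apply: comp_eq; [exact: g_sym | rewrite inE].
  by rewrite hirr.
move=> u v u' v' cuu' cvv' ncuv; rewrite hE => /orP[ruv|].
  by move: ncuv; rewrite (connect1 ruv).
move=> /existsP[B /andP[BP /existsP[B' /andP[B'P /and3P[hBB' uB vB']]]]].
rewrite hE; apply/orP; right; apply/existsP; exists B; rewrite BP /=.
apply/existsP; exists B'; rewrite B'P hBB' /=.
rewrite (comps_mem (g_sym _) BP uB) (comps_mem (g_sym _) B'P vB') !inE.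
by rewrite cuu' cvv'.
Qed.

Lemma structure i : (1 <= i <= k)%N ->
  (forall u v, connect (g i.+1) u v -> g i u v = g i.+1 u v) /\
  (forall u v u' v', connect (g i.+1) u u' -> connect (g i.+1) v v' ->
     ~~ connect (g i.+1) u v -> g i u v -> g i u' v').
Proof.
case/andP=> i1 ik.
case: (boolP (i.+1 <= k)%N) => ik1; last first.
  have -> : i = k by apply/eqP; rewrite eqn_leq ik leqNgt.
  by apply: structure_empty => x y; apply: g_top.
case: (boolP [exists x, exists y, e x y && (c x y == i.+1)]) => ex; last first.
  exact/structure_empty/no_higher.
apply: structure_div.
have := Hadm.1 i.+1; rewrite /= ltnS i1 ik1 => /(_ isT); apply.
case/existsP: ex => x /existsP[y exy]; by exists x, y.
Qed.

Lemma reg_sum i C u : (1 <= i <= k)%N -> C \in comps (g i.+1) -> u \in C ->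
  (\sum_(t in C) (g i.+1 u t : nat))%N = reg (g i.+1) C.
Proof.
move=> /andP[i1 ik] CP uC.
have E : (\sum_(t in C) (g i.+1 u t : nat))%N = deg (g i.+1) u.
  rewrite /deg -sum1_card [RHS]big_mkcond [LHS]big_mkcond /=.
  apply: eq_bigr => t _; rewrite inE.
  case rut: (g i.+1 u t); last by case: (t \in C).
  by rewrite (comps_loc (g_sym _) CP uC rut).
rewrite E /reg; case: pickP => [y yC|]; last by move/(_ u); rewrite uC.
case: (boolP (i.+1 <= k)%N) => ik1.
  by apply: (Hregular _ CP) => //; rewrite ltnS i1 ik1.
have -> : i = k by apply/eqP; rewrite eqn_leq ik leqNgt.
rewrite /deg.
have E0 z : [set t | g k.+1 z t] = set0 by apply/setP => t; rewrite !inE g_top.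
by rewrite !E0.
Qed.

Definition PN (r0 : rel V) (S : {set V}) : {poly R} := \det (maskmx S (FrP R r0)).
Definition HWs i (W : {set V}) : {set {set V}} := [set C in comps (g i.+1) | C \subset W].

Lemma PN_neq0 r0 S : PN r0 S != 0.
Proof. exact: det_FrP_neq0. Qed.

Lemma charQ i H : char_poly (quot_mx R e c i H) =
  \det (maskmx H (QFP R (reg (g i.+1)) (quot e c i))).
Proof.
rewrite det_maskmx; congr (\det _); apply/matrixP => p q; rewrite !mxE /QFP.
by rewrite (inj_eq enum_val_inj).
Qed.

Lemma mup_single i C l : (1 <= i <= k)%N -> C \in comps (g i.+1) -> ~~ (2 <= #|C|)%N ->
  mup l (PN (g i.+1) C) = ((reg (g i.+1) C)%:R == l).
Proof.
move=> ik CP C2.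
have [v Cv] : exists v, C = [set v].
  apply/cards1P; rewrite eqn_leq leqNgt C2 /=; exact: (comps_ne CP).
have vC : v \in C by rewrite Cv set11.
rewrite -(reg_sum ik CP vC) Cv big_set1 g_irr /PN det_FrP.
have ev (p : 'I_#|[set v]|) : enum_val p = v by apply/set1P; apply: enum_valP.
rewrite char_poly_trig; last first.
  by apply/is_trig_mxP => p q _; rewrite mxE !ev g_irr.
rewrite mup_prod => [|p _]; last by rewrite polyXsubC_eq0.
under eq_bigr => p _ do rewrite mxE !ev g_irr mup_XsubC.
by rewrite big_const_ord cards1 /= addn0.
Qed.

Definition Tm i l (H : {set {set V}}) : int :=
  (mup l (char_poly (quot_mx R e c i H)))%:Z -
  (#|[set C in H | (2 <= #|C|)%N && ((reg (g i.+1) C)%:R == l)]|)%:Z.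

Lemma level i W l : (1 <= i <= k)%N -> W \in comps (g i) -> (2 <= #|W|)%N ->
  ((mup l (PN (g i) W))%:Z : int) =
  \sum_(C in HWs i W | (2 <= #|C|)%N) (mup l (PN (g i.+1) C))%:Z +
  (if (2 <= #|HWs i W|)%N then Tm i l (HWs i W) else 0).
Proof.
move=> ik WP W2.
have [INNER JOIN] := structure ik.
have rsym := g_sym i.+1.
have ssym := g_sym i.
set r := g i.+1 in INNER JOIN rsym *.
set s := g i in INNER JOIN ssym *.
set Hs := HWs i W.
have WE u : u \in W -> W = comp s u by move=> uW; exact: (comps_mem ssym WP uW).
have hHW : forall u, u \in W -> exists2 C, C \in Hs & u \in C.
  move=> u uW; exists (comp r u); last exact: comp_refl.
  rewrite inE comp_in_comps (WE u uW) /=; apply: comp_sub => x y; exact: g_subS.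
have hsub : forall C u, C \in Hs -> u \in C -> u \in W.
  by move=> C u; rewrite inE => /andP[_ /subsetP]; apply.
have hP : forall C, C \in Hs -> C \in comps r by move=> C; rewrite inE => /andP[].
have hdis : forall C C' u, C \in Hs -> C' \in Hs -> u \in C -> u \in C' -> C = C'.
  by move=> C C' u /hP CP /hP C'P; apply: (comps_dis rsym).
have hne : forall C, C \in Hs -> (0 < #|C|)%N by move=> C /hP; apply: comps_ne.
have hloc : forall C u t, C \in Hs -> u \in C -> r u t -> t \in C.
  by move=> C u t /hP CP; apply: (comps_loc rsym).
have hreg : forall C u, C \in Hs -> u \in C -> (\sum_(t in C) (r u t : nat))%N = reg r C.
  by move=> C u /hP CP uC; apply: reg_sum.
have hs : forall C C' u v, C \in Hs -> C' \in Hs -> u \in C -> v \in C' ->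
    s u v = r u v || quot e c i C C'.
  move=> C C' u v CH C'H uC vC'.
  have CP := hP _ CH; have C'P := hP _ C'H.
  case: (eqVneq C C') => [eqC|neC].
    rewrite /quot eqC eqxx !andbF orbF; apply: INNER.
    by move: vC'; rewrite -eqC (comps_mem rsym CP uC) inE.
  have ruv : r u v = false.
    apply: negbTE; apply/negP => ruv; move/eqP: neC; apply.
    exact: hdis CH C'H (hloc _ _ _ CH uC ruv) vC'.
  rewrite ruv /= /quot CP C'P neC /=; apply/idP/idP.
    move=> suv; apply/existsP; exists u; rewrite uC /=; apply/existsP; exists v.
    by rewrite vC'.
  case/existsP => x /andP[xC /existsP[y /andP[yC' sxy]]].
  apply: (JOIN x y) sxy.
  - by move: uC; rewrite (comps_mem rsym CP xC) inE.
  - by move: vC'; rewrite (comps_mem rsym C'P yC') inE.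
  - rewrite -(comp_eqE rsym); apply/negP => /eqP E; move/eqP: neC; apply.
    by rewrite (comps_mem rsym CP xC) (comps_mem rsym C'P yC') E.
have hhm : forall C, quot e c i C C = false by move=> C; rewrite /quot eqxx !andbF.
have Wcov : W = \bigcup_(C in Hs) C.
  apply/setP => u; apply/idP/bigcupP => [uW|[C CH uC]]; last exact: hsub CH uC.
  by case: (hHW u uW) => C CH uC; exists C.
have PNr : PN r W = \prod_(C in Hs) PN r C.
  rewrite /PN {1}Wcov; apply: det_maskmx_cover => C C' CH C'H neC; split.
    rewrite disjoint_subset; apply/subsetP => u uC; rewrite inE; apply/negP => uC'.
    move/eqP: neC; apply; exact: hdis CH C'H uC uC'.
  move=> u v uC vC'; rewrite /FrP.
  have uv : (u == v) = false.
    apply: negbTE; apply/negP => /eqP uv; move/eqP: neC; apply.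
    by apply: hdis CH C'H uC _; rewrite uv.
  have ruv : r u v = false.
    apply: negbTE; apply/negP => ruv; move/eqP: neC; apply.
    exact: hdis CH C'H (hloc _ _ _ CH uC ruv) vC'.
  by rewrite uv ruv mulr0n subr0.
case: (boolP (2 <= #|Hs|)%N) => H2; rewrite ?H2.
- have J := join_poly R hHW hsub hdis hne hloc hreg hs hhm.
  have M := congr1 (mup l) J.
  rewrite -charQ in M.
  rewrite mupM ?PN_neq0 in M; last by apply/prodf_neq0 => C _; rewrite polyXsubC_eq0.
  rewrite mupM ?PN_neq0 ?monic_neq0 ?char_poly_monic // in M.
  rewrite mup_prod in M; last by move=> C _; rewrite polyXsubC_eq0.
  rewrite -/(PN r W) PNr mup_prod in M; last by move=> C _; rewrite PN_neq0.
  have ES : (\sum_(C in Hs) mup l ('X - ((reg r C)%:R)%:P))%N =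
      (\sum_(C in Hs) ((reg r C)%:R == l))%N by apply: eq_bigr => C _; rewrite mup_XsubC.
  rewrite ES in M.
  rewrite /Tm card_sum_cond.
  have split2 (F : {set V} -> nat) : (\sum_(C in Hs) F C =
      \sum_(C in Hs | (2 <= #|C|)%N) F C + \sum_(C in Hs | ~~ (2 <= #|C|)%N) F C)%N.
    exact: bigID.
  rewrite (split2 (fun C => ((reg r C)%:R == l) : nat)) (split2 (fun C => mup l (PN r C))) in M.
  have E : (\sum_(C in Hs | ~~ (2 <= #|C|)%N) mup l (PN r C))%N =
      (\sum_(C in Hs | ~~ (2 <= #|C|)%N) ((reg r C)%:R == l))%N.
    by apply: eq_bigr => C /andP[CH C2]; apply: mup_single => //; apply: hP.
  rewrite E in M.
  have -> : \sum_(C in Hs | (2 <= #|C|)%N) (mup l (PN r C))%:Z =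
      (\sum_(C in Hs | (2 <= #|C|)%N) mup l (PN r C))%N%:Z.
    by rewrite -natz natr_sum; apply: eq_bigr => C _; rewrite natz.
  move: M; rewrite /PN /r; lia.
  done.
-   have [u uW] : exists u, u \in W by apply/card_gt0P; apply: ltnW.
  have [C0 HsE] : exists C0, Hs = [set C0].
    have Hpos : (0 < #|Hs|)%N.
      by apply/card_gt0P; case: (hHW u uW) => C CH _; exists C.
    apply/cards1P; move: H2 Hpos; clear; lia.
  have WC0 : W = C0 by rewrite Wcov HsE big_set1.
  have WPr : W \in comps r by rewrite WC0; apply: hP; rewrite HsE set11.
  rewrite addr0 HsE -WC0 big_mkcondr big_set1 W2.
  congr (Posz (mup l _)); rewrite /PN; congr (\det _); apply: eq_maskmx_in => x y xW yW.
  rewrite /FrP INNER //.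
  by move: yW; rewrite (comps_mem rsym WPr xW) inE.
Qed.

Lemma conn_quot i x y : connect (g i) x y ->
  connect (quot e c i) (comp (g i.+1) x) (comp (g i.+1) y).
Proof.
move/connectP => [p pth ->]; elim: p x pth => [|z p IH] x /=; first by rewrite connect0.
case/andP => sxz pth; apply: connect_trans (IH z pth).
case: (eqVneq (comp (g i.+1) x) (comp (g i.+1) z)) => [->|ne]; first exact: connect0.
apply: connect1; rewrite /quot !comp_in_comps ne /=.
apply/existsP; exists x; rewrite comp_refl /=; apply/existsP; exists z.
by rewrite comp_refl.
Qed.

Lemma cls_eq i x :
  [set B' | connect (quot e c i) (comp (g i.+1) x) B'] = HWs i (comp (g i) x).
Proof.
have rsym := g_sym i.+1; have ssym := g_sym i.
apply/setP => B'; rewrite !inE; apply/idP/idP.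
  move/connectP => [p pth ->].
  have : (comp (g i.+1) x \in comps (g i.+1)) && (comp (g i.+1) x \subset comp (g i) x).
    by rewrite comp_in_comps /=; apply: comp_sub => u v; exact: g_subS.
  elim: p (comp (g i.+1) x) pth => [|B2 p IH] B //= /andP[qB pth] /andP[BP Bsub].
  apply: (IH B2 pth); case/and4P: qB => _ B2P _ /existsP[y /andP[yB /existsP[z /andP[zB2 syz]]]].
  rewrite B2P /= (comps_mem rsym B2P zB2).
  have xz : comp (g i) z = comp (g i) x.
    apply: comp_eq => //; rewrite inE; apply: connect_trans (connect1 syz).
    by move/subsetP: Bsub => /(_ y yB); rewrite inE.
  rewrite -xz; apply: comp_sub => u v; exact: g_subS.
case/andP => /compsP[y ->] sub.
have xy : connect (g i) x y.
  by move/subsetP: sub => /(_ y (comp_refl _ _)); rewrite inE.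
exact: conn_quot.
Qed.

Lemma HWs_card2 i W : W \in comps (g i) -> (2 <= #|HWs i W|)%N -> (2 <= #|W|)%N.
Proof.
move=> WP /card_gt1P[C1 [C2 [C1H C2H ne]]].
move: C1H C2H; rewrite !inE => /andP[C1P C1W] /andP[C2P C2W].
have [x1 x1C] : exists x, x \in C1 by apply/card_gt0P; exact: comps_ne C1P.
have [x2 x2C] : exists x, x \in C2 by apply/card_gt0P; exact: comps_ne C2P.
apply/card_gt1P; exists x1, x2; split.
- exact: (subsetP C1W).
- exact: (subsetP C2W).
apply/negP => /eqP ex; move/eqP: ne; apply.
by apply: (comps_dis (g_sym i.+1) C1P C2P x1C); rewrite ex.
Qed.

Definition Mp i l : int := \sum_(W in comps (g i) | (2 <= #|W|)%N) (mup l (PN (g i) W))%:Z.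

Lemma step i l : (1 <= i <= k)%N -> Mp i l = Mp i.+1 l + \sum_(H in a_c e c i) Tm i l H.
Proof.
move=> ik; have rsym := g_sym i.+1; have ssym := g_sym i.
rewrite /Mp.
transitivity (\sum_(W in comps (g i) | (2 <= #|W|)%N)
   (\sum_(C in HWs i W | (2 <= #|C|)%N) (mup l (PN (g i.+1) C))%:Z +
    (if (2 <= #|HWs i W|)%N then Tm i l (HWs i W) else 0))).
  by apply: eq_bigr => W /andP[WP W2]; apply: level.
rewrite big_split /=; congr (_ + _).
  rewrite (exchange_big_dep (fun C => (C \in comps (g i.+1)) && (2 <= #|C|)%N)) /=; last first.
    by move=> W C _; rewrite inE => /andP[/andP[-> _] ->].
  apply: eq_bigr => C /andP[CP C2].
  case/compsP: CP (CP) C2 => x -> CP C2.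
  rewrite (big_pred1 (comp (g i) x)) // => W /=.
  apply/idP/idP.
    case/andP => /andP[WP _] /andP[]; rewrite inE => /andP[_ sub] _.
    apply/eqP; apply: (comps_mem ssym WP); exact: (subsetP sub) _ (comp_refl _ _).
  move/eqP => ->; rewrite comp_in_comps /= inE CP /= C2 andbT.
  have sub : comp (g i.+1) x \subset comp (g i) x.
    by apply: comp_sub => u v; exact: g_subS.
  by rewrite sub andbT (leq_trans C2) // subset_leq_card.
set A := [set W in comps (g i) | (2 <= #|HWs i W|)%N].
transitivity (\sum_(W in A) Tm i l (HWs i W)).
  rewrite big_mkcond [RHS]big_mkcond /=; apply: eq_bigr => W _.
  rewrite inE; case WP: (W \in comps (g i)) => //=.
  case H2: (2 <= #|HWs i W|)%N; last by case: (2 <= #|W|)%N.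
  by rewrite (HWs_card2 WP H2).
have -> : a_c e c i = [set HWs i W | W in A].
  apply/setP => H; rewrite /a_c inE; apply/andP/imsetP.
    case=> /imsetP[B BP ->] H2.
    case/compsP: BP => x E; rewrite E in H2 *.
    exists (comp (g i) x); last exact: cls_eq.
    rewrite inE comp_in_comps /= -cls_eq.
    exact: H2.
  case=> W; rewrite inE => /andP[WP H2] ->; split => //.
  case/compsP: WP => x ->; rewrite -cls_eq.
  by apply/imsetP; exists (comp (g i.+1) x) => //; exact: comp_in_comps.
rewrite big_imset //.
move=> W1 W2; rewrite !inE => /andP[W1P _] /andP[W2P _] E.
case/compsP: W1P (W1P) E => x1 -> W1P E.
have : comp (g i.+1) x1 \in HWs i W2.
  rewrite -E inE comp_in_comps /=; apply: comp_sub => u v; exact: g_subS.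
rewrite inE => /andP[_ /subsetP /(_ x1 (comp_refl _ _)) x1W2].
by rewrite (comps_mem ssym W2P x1W2).
Qed.

Lemma Mp_top l : Mp k.+1 l = 0.
Proof.
rewrite /Mp big1 // => W /andP[WP W2]; exfalso.
case/compsP: WP W2 => x ->.
have -> : comp (g k.+1) x = [set x].
  apply/setP => y; rewrite !inE; apply/idP/idP => [/(connect_empty g_top) ->|/eqP ->] //.
by rewrite cards1.
Qed.

Lemma Mp_one l : Mp 1 l = (mup l (char_poly (adj_mx R e)))%:Z.
Proof.
have [x0 _] : exists x0 : V, x0 \in V by apply/card_gt0P; apply: ltnW.
have Ecomp y : comp (g 1) y = [set: V].
  by apply/setP => z; rewrite !inE (eq_connect g1) Hconn.
have Ecomps : comps (g 1) = [set [set: V]].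
  apply/setP => W; rewrite inE; apply/compsP/eqP => [[y ->]|->]; first exact: Ecomp.
  by exists x0; rewrite Ecomp.
rewrite /Mp Ecomps big_mkcondr big_set1 cardsT Hcard.
congr (Posz (mup l _)).
rewrite /PN (@eq_maskmx _ _ _ _ (FrP R e)); last by move=> u v; rewrite /FrP g1.
rewrite /char_poly; congr (\det _); apply/matrixP => p q.
rewrite !mxE !inE /= /FrP (inj_eq enum_val_inj).
by rewrite polyC_natr.
Qed.

Lemma final l : (mup l (char_poly (adj_mx R e)))%:Z =
  \sum_(1 <= i < k.+1) \sum_(H in a_c e c i) Tm i l H.
Proof.
rewrite -Mp_one (telescope_sumr_eq (fun i => - Mp i l)) //.
  by rewrite Mp_top oppr0 add0r opprK.
move=> j /andP[j1 jk]; rewrite (step l (i := j)) ?j1 //.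
by rewrite opprK addrA addNr add0r.
Qed.

End Graph.

Theorem mainTheorem4 (R : realType) (V : finType) (e : rel V) (k : nat)
    (c : V -> V -> nat) :
  simple_graph e -> connected_graph e -> (1 < #|V|)%N ->
  colouring e k c -> admissible e k c ->
  (forall i, (2 <= i <= k)%N ->
     forall C, C \in comps (gcol e c i) -> regular_on (gcol e c i) C) ->
  forall lambda : R,
    ((spec_mult (adj_mx R e) lambda)%:Z : int) =
    \sum_(1 <= i < k.+1)
      \sum_(H in a_c e c i)
        ((spec_mult (quot_mx R e c i H) lambda)%:Z
         - (#|[set C in H | (2 <= #|C|)%N &&
                ((reg (gcol e c i.+1) C)%:R == lambda)]|)%:Z).
Proof.
move=> Hs Hc Hv Hcol Hadm Hreg l.
exact: (final Hs Hc Hv Hcol Hadm Hreg l).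
Qed.
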